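(* There is a set $A\subseteq\mathbb{Z}$ such that (i) for every $n\in\mathbb{Z}$, $n\in A$ or $n+1\in A$ (or both), and (ii) $A\times A$ contains an infinite empty polygon, i.e., there is an infinite set $T\subseteq A\times A$ such that every point of $T$ is a vertex (extreme point) of $\mathrm{conv}(T)$ and $\mathrm{conv}(T)\cap(A\times A)=T$. *)

(* Defs.v *)
From Stdlib Require Import Reals ZArith List.
Open Scope R_scope.

Definition ptR (z : Z * Z) : R * R := (IZR (fst z), IZR (snd z)).

Definition conv (T : Z * Z -> Prop) (x : R * R) : Prop :=
  exists (n : nat) (p : nat -> Z * Z) (w : nat -> R),
    (forall i, (i <= n)%nat -> T (p i)) /\
    (forall i, (i <= n)%nat -> 0 <= w i) /\
    sum_f_R0 w n = 1 /\
    fst x = sum_f_R0 (fun i => w i * fst (ptR (p i))) n /\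
    snd x = sum_f_R0 (fun i => w i * snd (ptR (p i))) n.

Definition extreme_point (C : R * R -> Prop) (x : R * R) : Prop :=
  C x /\
  forall (y z : R * R) (t : R),
    C y -> C z -> 0 < t < 1 ->
    x = (t * fst y + (1 - t) * fst z, t * snd y + (1 - t) * snd z) ->
    y = z.

Definition infinite_set (T : Z * Z -> Prop) : Prop :=
  forall l : list (Z * Z), exists z, T z /\ ~ In z l.

(* Main.v *)
Require Import Defs.
From Stdlib Require Import Reals ZArith List.
From Stdlib Require Import Lra Lia Psatz Classical.
Open Scope R_scope.

Definition Tp (z : Z * Z) : Prop :=
  (5 <= fst z)%Z /\ (1 <= snd z)%Z /\ (snd z * snd z - 2 * fst z * fst z = -1)%Z.

Lemma s_facts : sqrt 2 * sqrt 2 = 2 /\ 141421/100000 < sqrt 2 < 141422/100000.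
Proof.
  pose proof (sqrt_pos 2) as H0.
  assert (H : sqrt 2 * sqrt 2 = 2) by (apply sqrt_sqrt; lra).
  split; [exact H|]. split; nra.
Qed.

Lemma sum_aux (w X Y : nat -> R) (a b c : R) : forall n,
  (forall i, (i <= n)%nat -> 0 <= w i /\ c <= a * X i + b * Y i) ->
  c * sum_f_R0 w n <= a * sum_f_R0 (fun i => w i * X i) n + b * sum_f_R0 (fun i => w i * Y i) n.
Proof.
  induction n as [|n IH]; intros H; simpl.
  - destruct (H 0%nat ltac:(lia)) as [H1 H2]. nra.
  - destruct (H (S n) ltac:(lia)) as [H1 H2].
    assert (IH' := IH (fun i Hi => H i ltac:(lia))).
    assert (c * w (S n) <= w (S n) * (a * X (S n) + b * Y (S n))) by nra.
    nra.
Qed.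

Lemma conv_ge (a b c : R) :
  (forall t, Tp t -> c <= a * IZR (fst t) + b * IZR (snd t)) ->
  forall x, conv Tp x -> c <= a * fst x + b * snd x.
Proof.
  intros H x [n [P [w [HT [Hw [Hs [H1 H2]]]]]]].
  rewrite H1, H2.
  replace c with (c * sum_f_R0 w n) by (rewrite Hs; ring).
  apply sum_aux. intros i Hi. split; [auto|]. simpl. apply H. auto.
Qed.

Lemma sum_lin (w X Y : nat -> R) (a b c : R) : forall n,
  sum_f_R0 (fun i => w i * (a * X i + b * Y i + c)) n =
  a * sum_f_R0 (fun i => w i * X i) n + b * sum_f_R0 (fun i => w i * Y i) n + c * sum_f_R0 w n.
Proof. induction n as [|n IH]; simpl; [ring| rewrite IH; ring]. Qed.

Lemma sum_nonneg (h : nat -> R) : forall n, (forall i, (i <= n)%nat -> 0 <= h i) -> 0 <= sum_f_R0 h n.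
Proof.
  induction n as [|n IH]; intros H; simpl.
  - apply H; lia.
  - assert (0 <= h (S n)) by (apply H; lia).
    assert (0 <= sum_f_R0 h n) by (apply IH; intros; apply H; lia). lra.
Qed.

Lemma sum_zero (h : nat -> R) : forall n, (forall i, (i <= n)%nat -> 0 <= h i) ->
  sum_f_R0 h n = 0 -> forall i, (i <= n)%nat -> h i = 0.
Proof.
  induction n as [|n IH]; intros H Hs i Hi; simpl in Hs.
  - assert (i = 0%nat) by lia. subst. auto.
  - assert (0 <= h (S n)) by (apply H; lia).
    assert (0 <= sum_f_R0 h n) by (apply sum_nonneg; intros; apply H; lia).
    destruct (Nat.eq_dec i (S n)) as [->|Hne]; [lra|].
    apply IH; [intros; apply H; lia| lra | lia].
Qed.

Lemma hyp_int q p x y : Tp (q, p) -> Tp (x, y) ->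
  (1 <= 2 * q * x - p * y)%Z /\ ((2 * q * x - p * y = 1)%Z -> q = x /\ p = y).
Proof.
  unfold Tp; cbn [fst snd]. intros [Hq [Hp Hqp]] [Hx [Hy Hxy]].
  assert (Hring : ((2*q*x - p*y) * (2*q*x - p*y) = (2*q*q - p*p) * (2*x*x - y*y) + 2 * (q*y - p*x) * (q*y - p*x))%Z) by ring.
  assert (E1 : (2*q*q - p*p = 1)%Z) by nia.
  assert (E2 : (2*x*x - y*y = 1)%Z) by nia.
  rewrite E1, E2 in Hring.
  assert (Hid : ((2*q*x - p*y) * (2*q*x - p*y) = 1 + 2 * (q*y - p*x) * (q*y - p*x))%Z) by lia.
  assert (Hpos : (p * y < 2 * q * x)%Z).
  { assert ((p*y) * (p*y) < (2*q*x)*(2*q*x))%Z by nia. nia. }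
  split; [lia|].
  intros HB. rewrite HB in Hid.
  assert (Hk : (q*y - p*x = 0)%Z) by nia.
  assert (q * q = x * x)%Z by nia.
  assert (q = x) by nia. subst. split; [reflexivity| nia].
Qed.

Lemma conv_pt t : Tp t -> conv Tp (ptR t).
Proof.
  intros Ht. exists 0%nat, (fun _ => t), (fun _ => 1).
  split; [intros; exact Ht|]. split; [intros; lra|].
  simpl. split; [reflexivity|]. split; ring.
Qed.

Lemma face q p : Tp (q, p) -> forall u, conv Tp u ->
  2 * IZR q * fst u - IZR p * snd u = 1 -> u = ptR (q, p).
Proof.
  intros Ht u Hu HF.
  destruct Hu as [n [P [w [HT [Hw [Hs [H1 H2]]]]]]].
  set (X := fun i => fst (ptR (P i))). set (Y := fun i => snd (ptR (P i))).
  set (g := fun i => w i * (2 * IZR q * X i + (- IZR p) * Y i + (-1))).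
  assert (Hg : forall i, (i <= n)%nat -> 0 <= g i).
  { intros i Hi. unfold g, X, Y. destruct (P i) as [x y] eqn:E. simpl.
    destruct (hyp_int q p x y Ht ltac:(rewrite <- E; auto)) as [Hb _].
    apply IZR_le in Hb. rewrite minus_IZR, !mult_IZR in Hb.
    pose proof (Hw i Hi). nra. }
  assert (Hsum : sum_f_R0 g n = 0).
  { unfold g. rewrite sum_lin. rewrite Hs. unfold X, Y.
    rewrite <- H1, <- H2. lra. }
  pose proof (sum_zero g n Hg Hsum) as Hz.
  assert (HX : forall i, (i <= n)%nat -> w i * X i = w i * IZR q /\ w i * Y i = w i * IZR p).
  { intros i Hi. specialize (Hz i Hi). unfold g, X, Y in *.
    destruct (P i) as [x y] eqn:E. simpl in *.
    destruct (hyp_int q p x y Ht ltac:(rewrite <- E; auto)) as [Hb He].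
    destruct (Z.eq_dec (2 * q * x - p * y) 1) as [E1|E1].
    - destruct (He E1) as [-> ->]. split; reflexivity.
    - assert (Hb2 : (2 <= 2 * q * x - p * y)%Z) by lia.
      apply IZR_le in Hb2. rewrite minus_IZR, !mult_IZR in Hb2.
      assert (w i = 0) by nra. rewrite H. split; ring. }
  destruct u as [u1 u2]. simpl in H1, H2. unfold ptR; simpl. f_equal.
  - rewrite H1. rewrite (sum_eq _ (fun i => w i * IZR q)).
    + rewrite <- scal_sum. rewrite Hs. ring.
    + intros i Hi. exact (proj1 (HX i Hi)).
  - rewrite H2. rewrite (sum_eq _ (fun i => w i * IZR p)).
    + rewrite <- scal_sum. rewrite Hs. ring.
    + intros i Hi. exact (proj2 (HX i Hi)).
Qed.

Lemma extreme t : Tp t -> extreme_point (conv Tp) (ptR t).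
Proof.
  intros Ht. split; [apply conv_pt; auto|].
  destruct t as [q p].
  intros y z s Hy Hz Hs Heq.
  assert (HT := Ht). unfold Tp in HT; cbn [fst snd] in HT.
  assert (HF : forall u, conv Tp u -> 1 <= 2 * IZR q * fst u + (- IZR p) * snd u).
  { apply conv_ge. intros [x y'] Hx. simpl.
    destruct (hyp_int q p x y' Ht Hx) as [Hb _].
    apply IZR_le in Hb. rewrite minus_IZR, !mult_IZR in Hb. lra. }
  pose proof (HF y Hy). pose proof (HF z Hz).
  unfold ptR in Heq; simpl in Heq. injection Heq as E1 E2.
  assert (Hqp : 2 * IZR q * IZR q - IZR p * IZR p = 1).
  { assert (E : (2 * q * q - p * p = 1)%Z) by nia.
    apply (f_equal IZR) in E. rewrite minus_IZR, !mult_IZR in E. exact E. }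
  assert (Hsum : s * (2 * IZR q * fst y - IZR p * snd y - 1) +
                 (1 - s) * (2 * IZR q * fst z - IZR p * snd z - 1) = 0).
  { rewrite E1, E2 in Hqp. nra. }
  assert (2 * IZR q * fst y - IZR p * snd y = 1) by nra.
  assert (2 * IZR q * fst z - IZR p * snd z = 1) by nra.
  rewrite (face q p Ht y Hy), (face q p Ht z Hz); auto.
Qed.

Definition beta0 := 7 - 5 * sqrt 2.

Lemma T_strip q p : Tp (q, p) ->
  beta0 <= IZR p - sqrt 2 * IZR q /\ IZR p - sqrt 2 * IZR q < 0.
Proof.
  unfold Tp; cbn [fst snd]. intros [Hq [Hp E]].
  assert (Hp7 : (7 <= p)%Z) by nia.
  apply IZR_le in Hq. apply IZR_le in Hp7.
  apply (f_equal IZR) in E. rewrite minus_IZR, !mult_IZR in E.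
  destruct s_facts as [Hss Hsb]. unfold beta0.
  assert (Hneg : IZR p - sqrt 2 * IZR q < 0).
  { assert ((IZR p - sqrt 2 * IZR q) * (IZR p + sqrt 2 * IZR q) = -1) by nra.
    assert (0 < IZR p + sqrt 2 * IZR q) by nra. nra. }
  split; [|exact Hneg].
  set (d := IZR p - sqrt 2 * IZR q). set (D := IZR p + sqrt 2 * IZR q).
  assert (HdD : d * D = -1) by (unfold d, D; nra).
  assert (HD : 7 + 5 * sqrt 2 <= D) by (unfold D; nra).
  assert (H5 : (5 * sqrt 2 - 7) * (7 + 5 * sqrt 2) = 1) by nra.
  assert ((d - (7 - 5 * sqrt 2)) * D >= 0) by nra.
  nra.
Qed.

Lemma conv_strip n m : conv Tp (ptR (n, m)) ->
  beta0 <= IZR m - sqrt 2 * IZR n /\ IZR m - sqrt 2 * IZR n <= 0.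
Proof.
  intros H. split.
  - pose proof (conv_ge (- sqrt 2) 1 beta0) as G.
    assert (G' := G ltac:(intros [x y] Ht; simpl; destruct (T_strip x y Ht); lra) _ H).
    simpl in G'. lra.
  - pose proof (conv_ge (sqrt 2) (-1) 0) as G.
    assert (G' := G ltac:(intros [x y] Ht; simpl; destruct (T_strip x y Ht); lra) _ H).
    simpl in G'. lra.
Qed.

Lemma T_grow : forall k : nat, exists z, Tp z /\ (Z.of_nat k <= fst z)%Z.
Proof.
  induction k as [|k [[q p] [Ht Hk]]].
  - exists (5%Z, 7%Z). unfold Tp; cbn [fst snd]; lia.
  - exists ((2 * p + 3 * q)%Z, (3 * p + 4 * q)%Z). unfold Tp in *; cbn [fst snd] in *. nia.
Qed.

Lemma list_bound (l : list (Z * Z)) : exists N, forall z, In z l -> (fst z < N)%Z.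
Proof.
  induction l as [|a l [N HN]].
  - exists 0%Z. intros z [].
  - exists (Z.max N (fst a + 1)). intros z [<-|Hz]; [lia|]. specialize (HN z Hz). lia.
Qed.

Theorem proposition9 :
  exists A : Z -> Prop,
    (forall n : Z, A n \/ A (n + 1)%Z) /\
    exists T : Z * Z -> Prop,
      (forall z, T z -> A (fst z) /\ A (snd z)) /\
      infinite_set T /\
      (forall z, T z -> extreme_point (conv T) (ptR z)) /\
      (forall z, (conv T (ptR z) /\ A (fst z) /\ A (snd z)) <-> T z).
Proof.
  destruct s_facts as [Hss Hsb].
  set (A := fun n => forall m, conv Tp (ptR (n, m)) -> Tp (n, m)).
  assert (Afst : forall q p, Tp (q, p) -> A q).
  { intros q p Ht m Hc. destruct (conv_strip _ _ Hc) as [H1 H2].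
    destruct (T_strip _ _ Ht) as [H3 H4]. unfold beta0 in *.
    assert (IZR (m - p) < 1) by (rewrite minus_IZR; lra).
    assert (-1 < IZR (m - p)) by (rewrite minus_IZR; lra).
    apply lt_IZR in H. apply lt_IZR in H0.
    replace m with p by lia. exact Ht. }
  assert (Asnd : forall q p, Tp (q, p) -> A p).
  { intros q p Ht m Hc. exfalso. destruct (conv_strip _ _ Hc) as [H1 H2].
    destruct (T_strip _ _ Ht) as [H3 H4]. unfold beta0 in *.
    assert (Hs2 : 2 * IZR q - sqrt 2 * IZR p = sqrt 2 * (sqrt 2 * IZR q - IZR p)).
    { replace (sqrt 2 * (sqrt 2 * IZR q - IZR p)) with ((sqrt 2 * sqrt 2) * IZR q - sqrt 2 * IZR p) by ring.
      rewrite Hss. ring. }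
    assert (Ha : 0 < 2 * IZR q - sqrt 2 * IZR p) by nra.
    assert (Hb : 2 * IZR q - sqrt 2 * IZR p <= 10 - 7 * sqrt 2) by nra.
    assert (IZR (m - 2 * q) < 0) by (rewrite minus_IZR, mult_IZR; lra).
    assert (-1 < IZR (m - 2 * q)) by (rewrite minus_IZR, mult_IZR; lra).
    apply lt_IZR in H. apply lt_IZR in H0. lia. }
  exists A. split.
  { intros n. destruct (classic (exists m, conv Tp (ptR (n, m)))) as [[m Hm]|Hno].
    - right. intros m' Hc. exfalso.
      destruct (conv_strip _ _ Hm) as [H1 H2].
      destruct (conv_strip _ _ Hc) as [H3 H4]. unfold beta0 in *.
      rewrite plus_IZR in H3, H4.
      assert (IZR (m' - m) < 2) by (rewrite minus_IZR; lra).
      assert (1 < IZR (m' - m)) by (rewrite minus_IZR; lra).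
      apply lt_IZR in H. apply lt_IZR in H0. lia.
    - left. intros m Hc. exfalso. apply Hno. eauto. }
  exists Tp. split; [|split; [|split]].
  - intros [q p] Ht. simpl. split; [eapply Afst|eapply Asnd]; eauto.
  - intros l. destruct (list_bound l) as [N HN].
    destruct (T_grow (Z.to_nat N)) as [z [Hz Hz2]].
    exists z. split; [auto|]. intros Hin. specialize (HN z Hin). lia.
  - apply extreme.
  - intros [q p]; simpl. split.
    + intros [Hc [Ha _]]. apply Ha. exact Hc.
    + intros Ht. split; [apply conv_pt; auto|]. split; [eapply Afst|eapply Asnd]; eauto.
Qed.
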